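(* $\mathtt{normal}$-$\mathtt{pred}$-$\mathtt{dio}$-$\mathtt{ESO}$-$\mathtt{HORN}\subseteq\mathtt{RealTime_{IA}}$: for every normalized predecessor Horn formula with diagonal input-output $\Phi$ there is an iterative array accepting in real time exactly the words $w\in\Sigma^+$ with $\langle w\rangle\models\Phi$.
   Context: Fix a finite alphabet $\Sigma$. A nonempty word $w=w_1\cdots w_n$ is represented by the structure $\langle w\rangle=([1,n];(Q_s)_{s\in\Sigma},\mathtt{min},\mathtt{max},\mathtt{suc},\mathtt{pred})$ with $Q_s(i)\iff w_i=s$, $\mathtt{min}(i)\iff i=1$, $\mathtt{max}(i)\iff i=n$, $\mathtt{suc}(i)=\min(i+1,n)$, $\mathtt{pred}(i)=\max(i-1,1)$; $x-1=\mathtt{pred}(x)$. A normalized predecessor Horn formula with diagonal input-output is $\Phi=\exists\mathbf{R}\forall x\forall y\,\psi(x,y)$, with $\mathbf{R}$ a finite set of binary relation symbols and $\psi$ a conjunction of clauses each of one of the forms: input clauses $x=y\wedge\mathtt{min}(x)\wedge Q_s(x)\to R(x,y)$ or $x=y\wedge\neg\mathtt{min}(x)\wedge Q_s(x)\to R(x,y)$ ($s\in\Sigma$, $R\in\mathbf{R}$); the contradiction clause $\mathtt{max}(x)\wedge\mathtt{max}(y)\wedge R_\bot(x,y)\to\bot$ for a fixed $R_\bot\in\mathbf{R}$; computation clauses $\delta_1\wedge\cdots\wedge\delta_r\to R(x,y)$, $R\in\mathbf{R}$, each $\delta_i$ a conjunction $S(x-1,y)\wedge\neg\mathtt{min}(x)$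 or $S(x,y-1)\wedge\neg\mathtt{min}(y)$, $S\in\mathbf{R}$. $\mathtt{normal}$-$\mathtt{pred}$-$\mathtt{dio}$-$\mathtt{ESO}$-$\mathtt{HORN}$ is the class of languages $\{w\in\Sigma^+:\langle w\rangle\models\Phi\}$ for such $\Phi$. An iterative array is a cellular automaton with finite state set $Q\supseteq\Sigma$, accepting states $Q_{accept}\subseteq Q$, neighborhood $\{-1,0,1\}$, transition function $\delta:Q^3\to Q$ and an input transition function $\delta_{input}$ for the first cell. On input $w=w_1\cdots w_n$ it uses cells $1,\dots,n$; cells outside are permanently in a state $\sharp$, cells not yet reached by information are in a quiescent state $\lambda$. The letter $w_i$ is given to cell 1 at time $i$ (state of cell 1 at time $i\le n$ computed by $\delta_{input}$ from $w_i$ and the previous neighbourhood states); other updates are $\langle c,t\rangle=\delta(\langle c-1,t-1\rangle,\langle c,t-1\rangle,\langle c+1,t-1\rangle)$. The array accepts $w$ in real time iff $\langle 1,n\rangle\in Q_{accept}$; $\mathtt{RealTime_{IA}}$ is the class of languages so accepted. *)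

(* Defs.v *)
From mathcomp Require Import all_boot.
Set Implicit Arguments.
Unset Strict Implicit.
Unset Printing Implicit Defensive.

(* Words: a word over Sigma is a seq Sigma; positions are 1-based.     *)

Definition wpred (i : nat) : nat := maxn i.-1 1.

(* An atom delta_i of a computation clause:
     (true,  S)  stands for  S(x-1,y) /\ ~min(x)
     (false, S)  stands for  S(x,y-1) /\ ~min(y)                       *)
Definition catom (Rs : finType) := (bool * Rs)%type.

Record horn_formula (Sigma Rs : finType) := HornFormula {
  (* input clauses (b, s, R):
       b = true :  x = y /\ min(x) /\ Q_s(x) -> R(x,y)
       b = false:  x = y /\ ~min(x) /\ Q_s(x) -> R(x,y)               *)
  input_clauses : seq (bool * Sigma * Rs);
  (* the contradiction clause max(x) /\ max(y) /\ R_bot(x,y) -> False,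
     for the fixed symbol R_bot (None = clause absent)                  *)
  contra_clause : option Rs;
  (* computation clauses (R, [:: d_1; ...; d_r]) :
       d_1 /\ ... /\ d_r -> R(x,y)                                      *)
  comp_clauses : seq (Rs * seq (catom Rs));
}.

Section HornSem.
Variables (Sigma Rs : finType).

Definition catom_holds (I : Rs -> nat -> nat -> Prop) (x y : nat)
    (d : catom Rs) : Prop :=
  if d.1 then I d.2 (wpred x) y /\ x <> 1
  else I d.2 x (wpred y) /\ y <> 1.

Definition horn_holds (phi : horn_formula Sigma Rs) (w : seq Sigma) (a : Sigma)
    (I : Rs -> nat -> nat -> Prop) : Prop :=
  let n := size w in
  forall x y : nat, 1 <= x <= n -> 1 <= y <= n ->
    (forall b s R, (b, s, R) \in input_clauses phi ->
        x = y -> (if b then x = 1 else x <> 1) -> nth a w x.-1 = s ->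
        I R x y)
 /\ (forall Rb, contra_clause phi = Some Rb ->
        x = n -> y = n -> I Rb x y -> False)
 /\ (forall R ds, (R, ds) \in comp_clauses phi ->
        (forall d, d \in ds -> catom_holds I x y d) -> I R x y).

Definition horn_models (phi : horn_formula Sigma Rs) (w : seq Sigma) : Prop :=
  match w with
  | [::] => False
  | a :: _ => exists I : Rs -> nat -> nat -> Prop, horn_holds phi w a I
  end.

End HornSem.

Record iterative_array (Sigma : finType) := IterativeArray {
  ia_Q : finType;
  ia_embed : Sigma -> ia_Q;
  ia_embed_inj : injective ia_embed;
  ia_accept : pred ia_Q;
  ia_quiescent : ia_Q;
  ia_border : ia_Q;
  ia_delta : ia_Q -> ia_Q -> ia_Q -> ia_Q;
  ia_delta_input : Sigma -> ia_Q -> ia_Q -> ia_Q -> ia_Q;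
      (* input transition of cell 1: letter and previous neighbourhood *)
  ia_quiescentP : ia_delta ia_quiescent ia_quiescent ia_quiescent = ia_quiescent;
}.

Arguments ia_Q {Sigma} _.
Arguments ia_accept {Sigma} _.
Arguments ia_quiescent {Sigma} _.
Arguments ia_border {Sigma} _.
Arguments ia_delta {Sigma} _.
Arguments ia_delta_input {Sigma} _.

Section IASem.
Variables (Sigma : finType) (A : iterative_array Sigma).

(* ia_conf w a t c = <c,t>, the state of cell c at time t on input w
   (a = default letter, irrelevant for positions inside w).      *)
Fixpoint ia_conf (w : seq Sigma) (a : Sigma) (t : nat) : nat -> ia_Q A :=
  let n := size w in
  match t with
  | 0 => fun c => if (1 <= c <= n) then ia_quiescent A else ia_border A
  | t'.+1 => fun c =>
      if ~~ (1 <= c <= n) then ia_border A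
      else if (c == 1) && (t'.+1 <= n) then
        ia_delta_input A (nth a w t') (ia_conf w a t' 0)
                         (ia_conf w a t' 1) (ia_conf w a t' 2)
      else ia_delta A (ia_conf w a t' c.-1) (ia_conf w a t' c)
                      (ia_conf w a t' c.+1)
  end.

Definition ia_accepts_realtime (w : seq Sigma) : Prop :=
  match w with
  | [::] => False
  | a :: _ => ia_accept A (ia_conf w a (size w) 1)
  end.

End IASem.

(* Main.v *)
Require Import Defs.
From mathcomp Require Import all_boot zify.

Set Implicit Arguments.
Unset Strict Implicit.
Unset Printing Implicit Defensive.

Section Sem.
Variables (Sigma Rs : finType) (phi : horn_formula Sigma Rs).
Notation V := {set Rs}.

Definition atom_ok (oX oY : option V) (d : catom Rs) : bool :=
  if d.1 then (if oX is Some v then d.2 \in v else false)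
  else (if oY is Some v then d.2 \in v else false).

Definition fire (oX oY : option V) : V :=
  [set R | has (fun p : Rs * seq (catom Rs) => (p.1 == R) && all (atom_ok oX oY) p.2)
              (comp_clauses phi)].

Definition inpset (first : bool) (s : Sigma) : V :=
  [set R | has (fun p : bool * Sigma * Rs => [&& p.1.1 == first, p.1.2 == s & p.2 == R])
              (input_clauses phi)].

Definition hit (D : V) : bool :=
  if contra_clause phi is Some Rb then Rb \in D else false.

Section M.
Variables (w : seq Sigma) (a : Sigma).

Fixpoint Mrow (x : nat) : nat -> V :=
  match x with
  | 0 => fun _ => set0
  | x'.+1 => fix col (y : nat) : V :=
      match y with
      | 0 => set0
      | y'.+1 =>
        (if x'.+1 == y'.+1 then inpset (x'.+1 == 1) (nth a w x') else set0)
        :|: fire (if x'.+1 == 1 then None else Some (Mrow x' y'.+1))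
                 (if y'.+1 == 1 then None else Some (col y'))
      end
  end.

Lemma Mstep x y : 0 < x -> 0 < y -> Mrow x y =
  (if x == y then inpset (x == 1) (nth a w x.-1) else set0)
  :|: fire (if x == 1 then None else Some (Mrow x.-1 y))
           (if y == 1 then None else Some (Mrow x y.-1)).
Proof. by case: x => // x; case: y => // y. Qed.

Lemma Mcongr x1 x2 y1 y2 : x1 = x2 -> y1 = y2 -> Mrow x1 y1 = Mrow x2 y2.
Proof. by move=> -> ->. Qed.

Lemma Mfire x y X Y : 0 < x -> 0 < y -> x <> y ->
  X = (if x == 1 then None else Some (Mrow x.-1 y)) ->
  Y = (if y == 1 then None else Some (Mrow x y.-1)) ->
  Mrow x y = fire X Y.
Proof.
move=> hx hy hxy -> ->; rewrite Mstep //.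
by case: eqP => // _; rewrite set0U.
Qed.

End M.

Lemma horn_iff (a : Sigma) (w' : seq Sigma) :
  horn_models phi (a :: w') <->
  ~~ hit (Mrow (a :: w') a (size (a :: w')) (size (a :: w'))).
Proof.
set w := a :: w'; set n := size w.
split.
- case=> I H.
  have claim : forall k x y, x + y < k -> 1 <= x <= n -> 1 <= y <= n ->
      forall R, R \in Mrow w a x y -> I R x y.
  { elim=> [|k IH] x y // hk hx hy R.
    rewrite Mstep; try lia.
    rewrite in_setU; case/orP.
    - case: eqP => [exy|_]; last by rewrite inE.
      rewrite inE => /hasP [[[b s] R'] Hin /and3P [/eqP Hb /eqP Hs /eqP HR]] /=.
      simpl in Hb, Hs, HR; subst R' x.
      apply: ((H y y hx hy).1 b s R Hin erefl) => //.
      by rewrite Hb; case: eqP.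
    - rewrite /fire inE => /hasP [[R' ds] Hin /andP [/eqP HR Hall]]; simpl in HR, Hall; subst.
      apply: ((H x y hx hy).2.2 R ds Hin) => d Hd.
      have := allP Hall d Hd; rewrite /atom_ok /catom_holds.
      case: d Hd => [[|] S] Hd /=.
      + case: eqP => // Hx1 HS; split => //.
        have -> : wpred x = x.-1 by rewrite /wpred; lia.
        apply: IH => //; lia.
      + case: eqP => // Hy1 HS; split => //.
        have -> : wpred y = y.-1 by rewrite /wpred; lia.
        apply: IH => //; lia. }
  apply/negP; rewrite /hit; case E: (contra_clause phi) => [Rb|] // Hin.
  have Hn : 1 <= n <= n by rewrite /n /=; lia.
  apply: ((H n n Hn Hn).2.1 Rb E erefl erefl).
  exact: (claim (n + n).+1).
- move=> nh; exists (fun R x y => R \in Mrow w a x y); rewrite /horn_holds /= => x y hx hy; split; [|split].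
  + move=> b s R Hin Hxy Hb Hs; subst y.
    rewrite Mstep; try lia.
    rewrite eqxx in_setU; apply/orP; left.
    rewrite inE; apply/hasP; exists (b, s, R) => //=.
    rewrite Hs !eqxx !andbT.
    by clear Hin; case: b Hb; case: (x =P 1).
  + move=> Rb Hc -> -> Hin; move: nh; by rewrite /hit Hc Hin.
  + move=> R ds Hin Hall.
    rewrite Mstep; try lia.
    rewrite in_setU; apply/orP; right.
    rewrite inE; apply/hasP; exists (R, ds) => //=; rewrite eqxx /=.
    apply/allP => d Hd; have := Hall d Hd.
    rewrite /catom_holds /atom_ok; case: d Hd => [[|] S] Hd /= [HS H1].
    * have Hw : wpred x = x.-1 by rewrite /wpred; lia.
      rewrite Hw in HS; by case: eqP.
    * have Hw : wpred y = y.-1 by rewrite /wpred; lia.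
      rewrite Hw in HS; by case: eqP.
Qed.



Definition St := option (V * V * V).
Definition Q := (St + Sigma)%type.
Definition dec (q : Q) : St := if q is inl s then s else None.
Definition up (s : V * V * V) := s.1.1.
Definition lo (s : V * V * V) := s.1.2.
Definition dg (s : V * V * V) := s.2.

Definition core (E1 E1' : V) (S Rt : St) : V * V * V :=
  let E2 := if S is Some s then Some (fire (omap up Rt) (Some (up s))) else None in
  let E2' := if S is Some s then Some (fire (Some (lo s)) (omap lo Rt)) else None in
  (fire E2 (Some E1), fire (Some E1') E2', E1).

Definition gen (L S Rt : St) : St :=
  if L is Some l then
    Some (core (fire (omap up S) (Some (up l))) (fire (Some (lo l)) (omap lo S)) S Rt)
  else None.

Definition gen_in (c : Sigma) (S Rt : St) : St :=
  let D := inpset (if S is None then true else false) c :|: fire (omap up S) (omap lo S) in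
  Some (core D D S Rt).

Definition accept (q : Q) : bool :=
  match dec q with Some s => ~~ hit (dg s) | None => false end.

Lemma inr_inj' : injective (@inr St Sigma).
Proof. by move=> x y [->]. Qed.

Definition myIA : iterative_array Sigma :=
  @IterativeArray Sigma Q inr inr_inj' accept (inl None) (inl None)
    (fun l s r => inl (gen (dec l) (dec s) (dec r)))
    (fun c l s r => inl (gen_in c (dec s) (dec r))) erefl.

End Sem.

Arguments Mrow : simpl never.
Arguments fire : simpl never.
Arguments inpset : simpl never.

Section Inv.
Variables (Sigma Rs : finType) (phi : horn_formula Sigma Rs) (w : seq Sigma) (a : Sigma).
Notation M := (Mrow phi w a).
Notation n := (size w).
Notation conf := (ia_conf (myIA phi) w a).

Definition val x c' :=
  (M x (x + c' + c' + 1), M (x + c' + c' + 1) x, M x (x + c' + c')).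

Ltac caseall := repeat match goal with
   | |- context [if (?u == ?v) then _ else _] => case: eqP => ?
   | |- context [if (?u <= ?v) then _ else _] => case: leqP => ?
   end.

Ltac solveM := symmetry; apply: Mfire; try lia; closeopt
with closeopt := caseall; simpl; first [ done | (exfalso; lia)
   | (congr Some; apply: Mcongr; lia) | (congr Some; solveM) | (apply: Mcongr; lia) ].

Lemma core_ok x c' E1 E1' : 0 < x -> E1 = M x (x + c' + c') -> E1' = M (x + c' + c') x ->
  core phi E1 E1'
       (if x == 1 then None else Some (val x.-1 c'))
       (if x <= 2 then None else Some (val (x - 2) c'.+1)) = val x c'.
Proof.
move=> hx -> ->; rewrite /core /val.
congr (_, _, _); solveM.
Qed.

Lemma conf_S t c : conf t.+1 c =
  if ~~ (1 <= c <= n) then inl None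
  else if (c == 1) && (t.+1 <= n) then
    inl (gen_in phi (nth a w t) (dec (conf t 1)) (dec (conf t 2)))
  else inl (gen phi (dec (conf t c.-1)) (dec (conf t c)) (dec (conf t c.+1))).
Proof. by []. Qed.

Lemma inv t : t <= n ->
  (forall c, (c == 0) || (t < c) -> dec (conf t c) = None) /\
  (forall x c', 0 < x -> x + c' = t -> dec (conf t c'.+1) = Some (val x c')).
Proof.
elim: t => [|t IH] ht.
- split; last by lia.
  by move=> c _ /=; case: ifP.
- have [IH1 IH2] := IH (ltnW ht).
  split.
  + move=> c hc; rewrite conf_S; case: ifP => hr; first done.
    have c2 : (c == 1) = false by apply/eqP; lia.
    rewrite c2 /= (IH1 c.-1) //; lia.
  + move=> x c' hx hxc; rewrite conf_S.
    have hr : (1 <= c'.+1 <= n) by lia.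
    rewrite hr /=.
    case: c' hxc {hr} => [|c''] hxc.
    * have ex : x = t.+1 by lia.
      subst x; rewrite eqxx ht /=.
      have HS : dec (conf t 1) = if t.+1 == 1 then None else Some (val t.+1.-1 0).
      { case: eqP => h; first [apply: IH1 | apply: IH2]; lia. }
      have HR : dec (conf t 2) = if t.+1 <= 2 then None else Some (val (t.+1 - 2) 1).
      { case: leqP => h; first [apply: IH1 | apply: IH2]; lia. }
      have HD : inpset phi (if (if t.+1 == 1 then None else Some (val t.+1.-1 0)) is None then true else false) (nth a w t)
         :|: fire phi (omap (@up _) (if t.+1 == 1 then None else Some (val t.+1.-1 0)))
                      (omap (@lo _) (if t.+1 == 1 then None else Some (val t.+1.-1 0))) = M t.+1 t.+1.
      { rewrite [RHS]Mstep // eqxx; congr (_ :|: _).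
        - by case: t {IH IH1 IH2 ht HS HR hxc hx}.
        - congr fire; closeopt. }
      rewrite HS HR; congr Some; apply: core_ok => //; rewrite HD; apply: Mcongr; lia.
    * rewrite /=.
      have HL : dec (conf t c''.+1) = Some (val x c'') by apply: IH2; lia.
      have HS : dec (conf t c''.+2) = if x == 1 then None else Some (val x.-1 c''.+1).
      { case: eqP => h; first [apply: IH1 | apply: IH2]; lia. }
      have HR : dec (conf t c''.+3) = if x <= 2 then None else Some (val (x - 2) c''.+2).
      { case: leqP => h; first [apply: IH1 | apply: IH2]; lia. }
      rewrite HL HS HR /=; congr Some; apply: core_ok => //; solveM.
Qed.

End Inv.

Theorem lemma6 (Sigma Rs : finType) (phi : horn_formula Sigma Rs) :
  exists A : iterative_array Sigma,
    forall w : seq Sigma, ia_accepts_realtime A w <-> horn_models phi w.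
Proof.
exists (myIA phi) => -[|a w']; first by split.
rewrite horn_iff /ia_accepts_realtime.
have [_ H2] := @inv _ _ phi (a :: w') a _ (leqnn _).
have Hq := H2 (size (a :: w')) 0 (ltn0Sn _) (addn0 _).
rewrite /= /accept Hq /dg /val /= !addn0.
by [].
Qed.
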